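(* Fix $\delta\in(0,1/2)$ and let $s=s(n)=\lfloor(1/2-\delta)n\rfloor$. Let $k=k(n)$ and $m=m(n)$ satisfy $k=o(\sqrt n)$ and $(1/2+\delta)^k m/n\to\infty$. Let $C_1,\dots,C_m$ be independent uniformly random $k$-clauses on the variables $x_1,\dots,x_n$. Then for every fixed $\zeta>0$, $$\Pr\Big(\big|m_S-(1/2+\delta)^k m\big|\le \zeta (1/2+\delta)^k m\ \text{ for all } S\subseteq[n] \text{ with } |S|=s\Big)\to 1 \quad (n\to\infty).$$
   Context: A uniformly random $k$-clause on $x_1,\dots,x_n$ is obtained by choosing a $k$-subset $K\subseteq[n]$ (its support) uniformly at random and a vector $g\in\{0,1\}^K$ uniformly at random; the clause is the Boolean function $C(x)=1$ iff $x_j=g_j$ for some $j\in K$ (an OR of $k$ literals on $k$ distinct variables). A clause $C_i$ misses $S\subseteq[n]$ if its support is contained in $[n]\setminus S$. For $S\subseteq[n]$, $m_S=|\{i\in[m]: C_i \text{ misses } S\}|$. *)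

(* Defs.v *)
From Stdlib Require Import Reals.
From mathcomp Require Import all_boot.
Set Implicit Arguments. Unset Strict Implicit. Unset Printing Implicit Defensive.

(* A clause on x_1..x_n (indexed by 'I_n): support K and sign vector g.
   g is a full function 'I_n -> bool; only its restriction to K matters. *)
Definition clause (n : nat) : finType := ({set 'I_n} * {ffun 'I_n -> bool})%type.

Definition clause_eval n (C : clause n) (x : {ffun 'I_n -> bool}) : bool :=
  [exists j in C.1, x j == C.2 j].

Definition outcome (n m : nat) : finType := {ffun 'I_m -> clause n}.

(* Uniform measure on valid
   outcomes = m independent uniform k-clauses (each k-clause on support K is
   represented by exactly 2^(n-k) values of g, uniformly). *)
Definition valid (n m k : nat) (w : outcome n m) : bool :=
  [forall i, #|(w i).1| == k].

Definition misses n (C : clause n) (S : {set 'I_n}) : bool := C.1 \subset ~: S.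

Definition mS n m (w : outcome n m) (S : {set 'I_n}) : nat :=
  #|[set i : 'I_m | misses (w i) S]|.

Definition Rleb (x y : R) : bool := if Rle_dec x y then true else false.

Definition Rprob (n m k : nat) (E : pred (outcome n m)) : R :=
  Rdiv (INR #|[set w : outcome n m | valid k w && E w]|)
       (INR #|[set w : outcome n m | valid k w]|).

Definition sfun (delta : R) (n : nat) : nat :=
  Z.to_nat (Int_part (Rmult (Rminus (Rdiv 1 2) delta) (INR n))).

Definition good_event (n m k s : nat) (p zeta : R) : pred (outcome n m) :=
  fun w => [forall S : {set 'I_n}, (#|S| == s) ==>
     Rleb (Rabs (Rminus (INR (mS w S)) (Rmult (pow p k) (INR m))))
          (Rmult zeta (Rmult (pow p k) (INR m)))].

Arguments Rprob : clear implicits.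
Arguments good_event : clear implicits.

(* Main.v *)
Require Import Defs.
From mathcomp Require Import all_boot.
From Stdlib Require Import Reals.
From mathcomp Require Import all_order all_algebra.
From Stdlib Require Import Lra Lia ZArith.
From mathcomp Require Import Rstruct.
Open Scope R_scope.

Import Order.TTheory GRing.Theory Num.Theory.
Local Open Scope ring_scope.

Lemma gen_sum (T : finType) (V A : pred T) (m : nat) (lam : R) :
  (\sum_(w : {ffun 'I_m -> T} | [forall i, V (w i)]) lam ^+ #|[set i | A (w i)]|
   = (\sum_(c | V c) (if A c then lam else 1)) ^+ m).
Proof.
rewrite big_mkcond /=.
have -> : ((\sum_(c | V c) (if A c then lam else 1)) ^+ m =
   \prod_(i < m) \sum_c (if V c then (if A c then lam else 1) else 0))%R.
  by rewrite -big_mkcond /= prodr_const card_ord.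
rewrite bigA_distr_bigA /=; apply: eq_bigr => w _.
case: forallP => [allV|nV].
  rewrite (eq_bigr (fun i => if A (w i) then lam else 1%R)); last first.
    by move=> i _; rewrite allV.
  by rewrite -big_mkcond /= prodr_const cardsE.
have [i Hi] : exists i, ~~ V (w i).
  apply/existsP; rewrite -negb_forall; apply/negP => /forallP; exact: nV.
by rewrite (bigD1 i) //= (negbTE Hi) mul0r.
Qed.

Lemma gen_base (T : finType) (V A : pred T) (lam : R) :
  (\sum_(c | V c) (if A c then lam else 1) =
   #|[pred c | V c]|%:R + #|[pred c | V c && A c]|%:R * (lam - 1)).
Proof.
have -> : (\sum_(c | V c) (if A c then lam else 1) =
   \sum_(c | V c) (1 + (if A c then lam - 1 else 0)))%R.
  by apply: eq_bigr => c _; case: (A c); rewrite ?addr0 // addrC subrK.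
rewrite big_split /= sumr_const -big_mkcondr /= sumr_const.
rewrite -mulr_natr mul1r; congr (_ + _); rewrite mulrC mulr_natr; congr (_ *+ _); apply: eq_card => c.
Qed.

Lemma markov_count (U : finType) (D E : pred U) (f : U -> R) (c : R) :
  (forall w, D w -> 0 <= f w) -> (forall w, D w -> E w -> c <= f w) ->
  #|[set w | D w && E w]|%:R * c <= \sum_(w | D w) f w.
Proof.
move=> f0 fc.
have [c0|c0] := leP c 0.
  apply: le_trans (sumr_ge0 _ f0).
  by rewrite mulr_ge0_le0 // ler0n.
have -> : #|[set w | D w && E w]|%:R * c = \sum_(w | D w && E w) c.
  by rewrite sumr_const cardsE mulr_natl.
rewrite [X in _ <= X](bigID E) /= -[X in X <= _]addr0 lerD //.
  by apply: ler_sum => w /andP[Dw Ew]; exact: fc.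
by apply: sumr_ge0 => w /andP[] /f0.
Qed.

Lemma exp_nat (ell : R) (j : nat) : exp (ell * INR j) = Rpow_def.pow (exp ell) j.
Proof.
elim: j => [|j IH]; first by rewrite /= Rmult_0_r exp_0.
by rewrite S_INR Rmult_plus_distr_l Rmult_1_r exp_plus IH /= Rmult_comm.
Qed.

Lemma tail_gen n m k (S : {set 'I_n}) (E : pred (outcome n m)) (ell x : R) :
  (forall w, valid k w -> E w -> ell * x <= ell * (mS w S)%:R) ->
  #|[set w : outcome n m | valid k w && E w]|%:R * exp (ell * x) <=
  (#|[set c : clause n | #|c.1| == k]|%:R +
     #|[set c : clause n | (#|c.1| == k) && misses c S]|%:R * (exp ell - 1)) ^+ m.
Proof.
move=> HE.
rewrite [in X in _ <= X]cardsE [in X in _ <= X]cardsE -(gen_base _ (fun c : clause n => #|c.1| == k) (fun c => misses c S) (exp ell)).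
rewrite -gen_sum.
apply: le_trans (markov_count _ (fun w : outcome n m => valid k w) E
   (fun w => exp (ell * (mS w S)%:R)) (exp (ell * x)) _ _) _.
- by move=> w _; apply/RleP/Rlt_le/exp_pos.
- move=> w Vw Ew; apply/RleP.
  have /RleP/Rle_lt_or_eq [lt|e] := HE w Vw Ew; last by apply: Req_le; f_equal.
  by apply/Rlt_le/exp_increasing.
- rewrite le_eqVlt; apply/orP; left; apply/eqP.
  apply: eq_bigr => w _; by rewrite -INRE exp_nat RpowE.
Qed.

Lemma card_clauses n (P : pred {set 'I_n}) :
  #|[set c : clause n | P c.1]| = muln #|[set K | P K]| (expn 2 n).
Proof.
have -> : [set c : clause n | P c.1] = setX [set K | P K] [set: {ffun 'I_n -> bool}].
  by apply/setP => -[K g]; rewrite !inE andbT.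
by rewrite cardsX cardsT card_ffun card_bool card_ord.
Qed.

Lemma cardN n k : #|[set c : clause n | #|c.1| == k]| = muln 'C(n, k) (expn 2 n).
Proof.
by rewrite (card_clauses _ (fun K : {set 'I_n} => #|K| == k)) card_draws card_ord.
Qed.

Lemma cardA n k (S : {set 'I_n}) :
  #|[set c : clause n | (#|c.1| == k) && misses c S]| = muln 'C(subn n #|S|, k) (expn 2 n).
Proof.
rewrite (card_clauses _ (fun K : {set 'I_n} => (#|K| == k) && (K \subset ~: S))).
have -> : [set K : {set 'I_n} | (#|K| == k) && (K \subset ~: S)] = [set K : {set 'I_n} | K \subset ~: S & #|K| == k].
  by apply/setP => K; rewrite !inE andbC.
by rewrite cards_draws cardsCs setCK card_ord.
Qed.

Local Close Scope ring_scope.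

Lemma card_valid n m k :
  #|[set w : outcome n m | valid k w]| = expn ('C(n, k) * expn 2 n) m.
Proof.
rewrite -cardN -[X in expn _ X]card_ord -card_ffun_on.
apply: eq_card => w; rewrite inE; apply/forallP/ffun_onP => H i.
  by rewrite inE; apply: H.
by have := H i; rewrite inE.
Qed.

Lemma INR_expn a b : INR (expn a b) = INR a ^ b.
Proof. elim: b => [|b IH]; first by []. by rewrite expnS mult_INR IH. Qed.

Lemma exp_pow_nat (y : R) (j : nat) : exp y ^ j = exp (y * INR j).
Proof. by rewrite exp_nat. Qed.

Lemma Wrap (P Q : Prop) : (P -> Q) -> P -> Q. Proof. by []. Qed.

Lemma tail_frac n m k (S : {set 'I_n}) (E : pred (outcome n m)) (ell x : R) :
  leq k n ->
  (forall w, valid k w -> E w -> ell * x <= ell * INR (mS w S)) ->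
  0 <= 1 + INR 'C(subn n #|S|, k) / INR 'C(n, k) * (exp ell - 1) ->
  INR #|[set w | valid k w && E w]| <=
  INR #|[set w : outcome n m | valid k w]| *
    exp (INR 'C(subn n #|S|, k) / INR 'C(n, k) * INR m * (exp ell - 1) - ell * x).
Proof.
move=> kn HE H1.
set q := INR 'C(subn n #|S|, k) / INR 'C(n, k).
have tail := tail_gen n m k S E ell x.
have {}tail := tail ltac:(by move=> w Vw Ew; apply/Rstruct.RleP; rewrite -INRE; apply: HE).
move/Rstruct.RleP: tail => tail.
rewrite cardN cardA -!INRE -RpowE in tail.
have C0 : 0 < INR 'C(n, k) by apply: lt_0_INR; apply/ssrnat.ltP; rewrite bin_gt0.
have G0 : 0 < INR (expn 2 n) by apply: lt_0_INR; apply/ssrnat.ltP; rewrite expn_gt0.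
have eqq : INR ('C(n, k) * expn 2 n) + INR ('C(subn n #|S|, k) * expn 2 n) * (exp ell - 1)
   = INR ('C(n, k) * expn 2 n) * (1 + q * (exp ell - 1)).
  rewrite !mult_INR /q; field; lra.
have {}tail : INR #|[set w | valid k w && E w]| * exp (ell * x) <=
  (INR ('C(n, k) * expn 2 n) + INR ('C(subn n #|S|, k) * expn 2 n) * (exp ell - 1)) ^ m := tail.
rewrite eqq in tail.
rewrite card_valid INR_expn.
rewrite Rpow_mult_distr in tail.
have B : (1 + q * (exp ell - 1)) ^ m <= exp (q * (exp ell - 1) * INR m).
  rewrite -exp_pow_nat; apply: pow_incr; split => //; apply: exp_ineq1_le.
have E0 : 0 < exp (ell * x) by apply: exp_pos.
have P0 : 0 <= INR ('C(n, k) * expn 2 n) ^ m by apply: pow_le; apply: pos_INR.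
have -> : exp (q * INR m * (exp ell - 1) - ell * x) = exp (q * (exp ell - 1) * INR m) / exp (ell * x).
  replace (q * INR m * (exp ell - 1)) with (q * (exp ell - 1) * INR m) by ring.
  by rewrite /Rminus exp_plus exp_Ropp.
apply: (Rmult_le_reg_r (exp (ell * x))) => //.
rewrite Rmult_assoc /Rdiv Rmult_assoc Rinv_l ?Rmult_1_r; last lra.
apply: Rle_trans tail _.
by apply: Rmult_le_compat_l.
Qed.

Lemma ln_le_sub1 x : 0 < x -> ln x <= x - 1.
Proof. move=> x0; have := exp_ineq1_le (ln x); rewrite exp_ln //; lra. Qed.

Lemma ln_ge x : 0 < x -> 1 - / x <= ln x.
Proof.
move=> x0; have := ln_le_sub1 (/ x) (Rinv_0_lt_compat _ x0).
rewrite ln_Rinv //; lra.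
Qed.

Lemma RlebP' x y : Defs.Rleb x y = true <-> x <= y.
Proof. rewrite /Defs.Rleb; case: Rle_dec => //; split => //. Qed.

Lemma exp_mono x y : x <= y -> exp x <= exp y.
Proof. by case/Rle_lt_or_eq => [/exp_increasing/Rlt_le|->] //; apply: Rle_refl. Qed.

Definition qf n k (S : {set 'I_n}) : R := INR 'C(subn n #|S|, k) / INR 'C(n, k).
Arguments qf {n}.

Lemma upper_tail n m k (S : {set 'I_n}) (eta : R) :
  leq k n -> 0 < eta <= 1 ->
  INR #|[set w : outcome n m | valid k w &&
      Defs.Rleb ((1 + eta) * (qf k S * INR m)) (INR (mS w S))]| <=
  INR #|[set w : outcome n m | valid k w]| * exp (- (eta ^ 2 / 6) * (qf k S * INR m)).
Proof.
move=> kn [e0 e1].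
have q0 : 0 <= qf k S.
  rewrite /qf; apply: Rmult_le_pos; first exact: pos_INR.
  apply/Rlt_le/Rinv_0_lt_compat/lt_0_INR/ssrnat.ltP; by rewrite bin_gt0.
have mu0 : 0 <= qf k S * INR m by apply: Rmult_le_pos => //; apply: pos_INR.
set mu := qf k S * INR m in mu0 *.
set u := eta / 2.
have u0 : 0 < u by rewrite /u; lra.
have L0 : 0 <= ln (1 + u).
  have := ln_ge (1 + u); move/(_ ltac:(lra)).
  have : 0 <= 1 - / (1 + u).
    have : / (1 + u) <= 1.
      rewrite -Rinv_1; apply: Rinv_le_contravar; lra.
    lra.
  lra.
have Hgen := tail_frac n m k S (fun w : outcome n m => Defs.Rleb ((1 + eta) * mu) (INR (mS w S)))
  (ln (1 + u)) ((1 + eta) * mu) kn.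
rewrite exp_ln in Hgen; last lra.
have {}Hgen := Hgen ltac:(move=> w _ /RlebP' H; by apply: Rmult_le_compat_l).
have {}Hgen := Hgen ltac:(rewrite -/(qf k S); nra).
apply: Rle_trans Hgen _.
apply: Rmult_le_compat_l; first exact: pos_INR.
rewrite -/(qf k S) -/mu.
have Lb : u / (1 + u) <= ln (1 + u).
  have := ln_ge (1 + u) ltac:(lra).
  have -> : 1 - / (1 + u) = u / (1 + u) by field; lra.
  done.
apply: exp_mono.
have : (1 + eta) * mu * (u / (1 + u)) <= (1 + eta) * mu * ln (1 + u).
  apply: Rmult_le_compat_l => //; nra.
have -> : (1 + eta) * mu * (u / (1 + u)) = mu * u * (1 + eta) / (1 + u) by field; lra.
have : mu * u * (1 + eta) / (1 + u) >= mu * u + (eta ^ 2 / 6) * mu.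
  apply: Rle_ge; apply: (Rmult_le_reg_r (1 + u)); first lra.
  have -> : mu * u * (1 + eta) / (1 + u) * (1 + u) = mu * u * (1 + eta) by field; lra.
  rewrite /u.
  have h : 0 <= mu * (eta * eta * (1 - eta) / 12).
    apply: Rmult_le_pos => //; have := Rmult_le_pos (eta * eta) (1 - eta); nra.
  nra.
set X := mu * u * (1 + eta) / (1 + u); set L := ln (1 + u).
move=> h1 h2; clearbody mu u X L.
have -> : mu * (1 + u - 1) - L * ((1 + eta) * mu) = mu * u - (1 + eta) * mu * L by ring.
lra.
Qed.

Lemma lower_tail n m k (S : {set 'I_n}) (eta : R) :
  leq k n -> 0 < eta <= 1 -> qf k S <= 1 ->
  INR #|[set w : outcome n m | valid k w &&
      Defs.Rleb (INR (mS w S)) ((1 - eta) * (qf k S * INR m))]| <=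
  INR #|[set w : outcome n m | valid k w]| * exp (- (eta ^ 2 / 6) * (qf k S * INR m)).
Proof.
move=> kn [e0 e1] q1.
have q0 : 0 <= qf k S.
  rewrite /qf; apply: Rmult_le_pos; first exact: pos_INR.
  apply/Rlt_le/Rinv_0_lt_compat/lt_0_INR/ssrnat.ltP; by rewrite bin_gt0.
have mu0 : 0 <= qf k S * INR m by apply: Rmult_le_pos => //; apply: pos_INR.
set mu := qf k S * INR m in mu0 *.
set u := eta / 2.
have u0 : 0 < u by rewrite /u; lra.
have u1 : u <= 1/2 by rewrite /u; lra.
have L0 : ln (1 - u) <= 0.
  have := ln_le_sub1 (1 - u) ltac:(lra); lra.
have Hgen := tail_frac n m k S (fun w : outcome n m => Defs.Rleb (INR (mS w S)) ((1 - eta) * mu))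
  (ln (1 - u)) ((1 - eta) * mu) kn.
rewrite exp_ln in Hgen; last lra.
have {}Hgen := Hgen ltac:(move=> w _ /RlebP' H; by apply: Rmult_le_compat_neg_l).
have {}Hgen := Hgen ltac:(rewrite -/(qf k S); nra).
apply: Rle_trans Hgen _.
apply: Rmult_le_compat_l; first exact: pos_INR.
rewrite -/(qf k S) -/mu.
have Lb : - (u / (1 - u)) <= ln (1 - u).
  have := ln_ge (1 - u) ltac:(lra).
  have -> : 1 - / (1 - u) = - (u / (1 - u)) by field; lra.
  done.
apply: exp_mono.
have Y0 : 0 <= (1 - eta) * mu by apply: Rmult_le_pos; lra.
have : - ((1 - eta) * mu * (u / (1 - u))) <= (1 - eta) * mu * ln (1 - u).
  have := Rmult_le_compat_l _ _ _ Y0 Lb; lra.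
have -> : (1 - eta) * mu * (u / (1 - u)) = mu * u * (1 - eta) / (1 - u) by field; lra.
have : mu * u * (1 - eta) / (1 - u) <= mu * u - (eta ^ 2 / 6) * mu.
  apply: (Rmult_le_reg_r (1 - u)); first lra.
  have -> : mu * u * (1 - eta) / (1 - u) * (1 - u) = mu * u * (1 - eta) by field; lra.
  rewrite /u.
  have h : 0 <= mu * (eta * eta * (1 / 12) + eta * eta * eta / 12).
    apply: Rmult_le_pos => //; nra.
  nra.
set X := mu * u * (1 - eta) / (1 - u); set L := ln (1 - u).
move=> h1 h2; clearbody mu u X L.
have -> : mu * (1 - u - 1) - L * ((1 - eta) * mu) = - (mu * u) - (1 - eta) * mu * L by ring.
lra.
Qed.

Lemma real_core (x mu P eta zeta : R) :
  0 <= P -> 0 < eta -> eta <= 1/3 -> 3 * eta <= zeta ->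
  Rabs (mu - P) <= eta * P -> ~ ((1 + eta) * mu <= x) -> ~ (x <= (1 - eta) * mu) ->
  Rabs (x - P) <= zeta * P.
Proof.
move=> P0 e0 e1 ez H1 H2 H3.
have H2' := Rnot_le_lt _ _ H2; have H3' := Rnot_le_lt _ _ H3.
have a := Rle_abs (mu - P); have b := Rle_abs (- (mu - P)); rewrite Rabs_Ropp in b.
apply: Rabs_le; split; nra.
Qed.

Lemma card_bigcup_le (I T : finType) (P : pred I) (A : I -> {set T}) :
  leq #|\bigcup_(i | P i) A i| (\sum_(i | P i) #|A i|).
Proof.
elim/big_rec2: _ => [|i n U _ le]; first by rewrite cards0.
by rewrite (leq_trans (leq_card_setU _ _).1) ?leq_add2l.
Qed.

Lemma bad_bound n m k s (p zeta eta : R) :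
  leq k n -> leq s n -> 0 < eta -> eta <= 1/3 -> 3 * eta <= zeta ->
  0 <= p ^ k * INR m ->
  Rabs (INR 'C(subn n s, k) / INR 'C(n, k) * INR m - p ^ k * INR m) <= eta * (p ^ k * INR m) ->
  INR 'C(subn n s, k) / INR 'C(n, k) <= 1 ->
  INR #|[set w : outcome n m | valid k w && ~~ good_event n m k s p zeta w]| <=
  INR #|[set w : outcome n m | valid k w]| *
    (2 * (2 ^ n * exp (- (eta ^ 2 / 6) * (INR 'C(subn n s, k) / INR 'C(n, k) * INR m)))).
Proof.
move=> kn sn e0 e1 ez P0 Hq q1.
set q := INR 'C(subn n s, k) / INR 'C(n, k).
set P := p ^ k * INR m.
set Up := fun S : {set 'I_n} => [set w : outcome n m | valid k w &&
      Defs.Rleb ((1 + eta) * (qf k S * INR m)) (INR (mS w S))].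
set Lo := fun S : {set 'I_n} => [set w : outcome n m | valid k w &&
      Defs.Rleb (INR (mS w S)) ((1 - eta) * (qf k S * INR m))].
have sub : [set w : outcome n m | valid k w && ~~ good_event n m k s p zeta w]
   \subset \bigcup_(S : {set 'I_n} | #|S| == s) (Up S :|: Lo S).
  apply/subsetP => w; rewrite inE => /andP[Vw /forallPn[S]].
  rewrite negb_imply => /andP[/eqP HS Hn].
  apply/bigcupP; exists S; first by rewrite HS.
  have qS : qf k S = q by rewrite /qf HS.
  rewrite !inE Vw /= qS.
  case E1 : (Defs.Rleb ((1 + eta) * (q * INR m)) (INR (mS w S))) => //=.
  case E2 : (Defs.Rleb (INR (mS w S)) ((1 - eta) * (q * INR m))) => //.
  exfalso; move/negP: Hn; apply; apply/RlebP'.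
  apply: (real_core (INR (mS w S)) (q * INR m) P eta zeta) => //.
  - by move/RlebP'; rewrite E1.
  - by move/RlebP'; rewrite E2.
have cnt := leq_trans (subset_leq_card sub) (card_bigcup_le _ _ _ _).
set V := INR #|[set w : outcome n m | valid k w]|.
set e := exp (- (eta ^ 2 / 6) * (q * INR m)).
have V0 : 0 <= V by apply: pos_INR.
have E0 : 0 <= e by apply/Rlt_le/exp_pos.
have per : forall S : {set 'I_n}, #|S| == s -> INR #|Up S :|: Lo S| <= 2 * (V * e).
  move=> S /eqP HS.
  have qS : qf k S = q by rewrite /qf HS.
  apply: Rle_trans (le_INR _ _ (ssrnat.leP (leq_card_setU (Up S) (Lo S)).1)) _.
  rewrite plus_INR.
  have eb : 0 < eta <= 1 by lra.
  have h1 := upper_tail n m k S eta kn eb.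
  have h2 := lower_tail n m k S eta kn eb ltac:(by rewrite qS).
  rewrite qS in h1 h2.
  rewrite -/V -/e in h1 h2. rewrite /Up /Lo qS.
  apply: Rle_trans (Rplus_le_compat _ _ _ _ h1 h2) _; lra.
apply: Rle_trans (le_INR _ _ (ssrnat.leP cnt)) _.
rewrite INRE natr_sum.
apply/RleP.
pose c := 2 * (V * e).
Local Open Scope ring_scope.
have Hs : \sum_(i : {set 'I_n} | #|i| == s) (#|Up i :|: Lo i|)%:R <= \sum_(i : {set 'I_n} | #|i| == s) c.
  apply: ler_sum => S HS; apply/RleP; rewrite -INRE; exact: per S HS.
apply: le_trans Hs _.
Local Close Scope ring_scope.
rewrite sumr_const -mulr_natr -INRE; apply/RleP.
have c2 : INR #|[pred i : {set 'I_n} | #|i| == s]| <= 2 ^ n.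
  have := le_INR _ _ (ssrnat.leP (max_card [pred i : {set 'I_n} | #|i| == s])).
  rewrite -cardsT -powersetT card_powerset cardsT card_ord INR_expn.
  by [].
have c0 : 0 <= c by rewrite /c; nra.
apply: Rle_trans (Rmult_le_compat_l _ _ _ c0 c2) _.
apply: Req_le; rewrite /c; ring.
Qed.

Lemma ffact_bounds (n t k : nat) :
  leq t n -> leq k t -> (0 < n)%nat ->
  forall j, leq j k ->
  ((INR t - INR k) / INR n) ^ j * INR (falling_factorial n j) <= INR (falling_factorial t j) /\
  INR (falling_factorial t j) <= (INR t / INR n) ^ j * INR (falling_factorial n j).
Proof.
move=> tn kt n0.
have N0 : 0 < INR n by apply: lt_0_INR; apply/ssrnat.ltP.
have tnR : INR t <= INR n by apply: le_INR; apply/ssrnat.leP.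
have ktR : INR k <= INR t by apply: le_INR; apply/ssrnat.leP.
elim=> [|j IH] jk.
  rewrite /= !Rmult_1_l; split; apply: Rle_refl.
have jk' : leq j k by apply: ltnW.
have [IH1 IH2] := IH jk'.
have jt : leq j t by apply: leq_trans jk' kt.
have jn : leq j n by apply: leq_trans jt tn.
have jkR : INR j + 1 <= INR k by rewrite -S_INR; apply: le_INR; apply/ssrnat.leP.
have F0 : 0 <= INR (falling_factorial n j) by apply: pos_INR.
have T0 : 0 <= INR (falling_factorial t j) by apply: pos_INR.
have j0 : 0 <= INR j by apply: pos_INR.
set L := (INR t - INR k) / INR n.
set U := INR t / INR n.
have L0 : 0 <= L by rewrite /L; apply: Rmult_le_pos; [lra | apply/Rlt_le/Rinv_0_lt_compat].
have U0 : 0 <= U by rewrite /U; apply: Rmult_le_pos; [apply: pos_INR | apply/Rlt_le/Rinv_0_lt_compat].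
have Ls : L * (INR n - INR j) <= INR t - INR j.
  rewrite /L; apply: (Rmult_le_reg_r (INR n)) => //.
  have -> : (INR t - INR k) / INR n * (INR n - INR j) * INR n = (INR t - INR k) * (INR n - INR j) by field; lra.
  nra.
have Us : INR t - INR j <= U * (INR n - INR j).
  rewrite /U; apply: (Rmult_le_reg_r (INR n)) => //.
  have -> : INR t / INR n * (INR n - INR j) * INR n = INR t * (INR n - INR j) by field; lra.
  nra.
have Lj0 : 0 <= L ^ j by apply: pow_le.
rewrite !ffactnSr !mult_INR !minus_INR; try by apply/ssrnat.leP.
split.
  rewrite /=.
  have -> : L * L ^ j * (INR (falling_factorial n j) * (INR n - INR j)) =
     (L ^ j * INR (falling_factorial n j)) * (L * (INR n - INR j)) by ring.
  apply: Rmult_le_compat => //; first by apply: Rmult_le_pos.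
  apply: Rmult_le_pos => //; lra.
rewrite /=.
have -> : U * U ^ j * (INR (falling_factorial n j) * (INR n - INR j)) =
   (U ^ j * INR (falling_factorial n j)) * (U * (INR n - INR j)) by ring.
apply: Rmult_le_compat => //; lra.
Qed.

Lemma q_bounds (n t k : nat) :
  leq t n -> leq k t -> (0 < n)%nat ->
  ((INR t - INR k) / INR n) ^ k <= INR 'C(t, k) / INR 'C(n, k) <= (INR t / INR n) ^ k.
Proof.
move=> tn kt n0.
have [H1 H2] := ffact_bounds n t k tn kt n0 k (leqnn k).
have kn : leq k n by apply: leq_trans kt tn.
have Fn : 0 < INR (falling_factorial n k).
  apply: lt_0_INR; apply/ssrnat.ltP; by rewrite ffact_gt0.
have Kf : 0 < INR (factorial k) by apply: lt_0_INR; apply/ssrnat.ltP; apply: fact_gt0.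
have -> : INR 'C(t, k) / INR 'C(n, k) = INR (falling_factorial t k) / INR (falling_factorial n k).
  rewrite -!bin_ffact !mult_INR; field; split; try lra.
  have : 0 < INR 'C(n, k) by apply: lt_0_INR; apply/ssrnat.ltP; rewrite bin_gt0.
  lra.
split.
  apply: (Rmult_le_reg_r (INR (falling_factorial n k))) => //.
  rewrite /Rdiv Rmult_assoc Rinv_l; lra.
apply: (Rmult_le_reg_r (INR (falling_factorial n k))) => //.
rewrite /Rdiv Rmult_assoc Rinv_l; lra.
Qed.

Lemma bern (x : R) (k : nat) : 0 <= x <= 1 -> 1 - INR k * x <= (1 - x) ^ k.
Proof.
move=> [x0 x1]; elim: k => [|k IH]; first by rewrite /=; lra.
rewrite S_INR /=.
have : (1 - x) * (1 - INR k * x) <= (1 - x) * (1 - x) ^ k.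
  apply: Rmult_le_compat_l => //; lra.
have := pos_INR k; nra.
Qed.

Lemma upow (y : R) (k : nat) : 0 <= y -> INR k * y < 1 -> (1 + y) ^ k <= / (1 - INR k * y).
Proof.
move=> y0 ky.
case: k ky => [|k] ky.
  by rewrite /= Rmult_0_l Rminus_0_r Rinv_1; apply: Rle_refl.
have k1 : 1 <= INR k.+1 by rewrite S_INR; have := pos_INR k; lra.
have y1 : y <= 1 by nra.
have B := bern y k.+1 (conj y0 y1).
have P1 : (1 + y) ^ k.+1 * (1 - y) ^ k.+1 <= 1.
  rewrite -Rpow_mult_distr.
  apply: Rle_trans (pow_incr _ 1 k.+1 _) _; first (split; nra).
  rewrite pow1; apply: Rle_refl.
have Q0 : 0 < 1 - INR k.+1 * y by lra.
have Pp : 0 <= (1 + y) ^ k.+1 by apply: pow_le; lra.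
apply: (Rmult_le_reg_r (1 - INR k.+1 * y)) => //.
rewrite Rinv_l; last lra.
have := Rmult_le_compat_l _ _ _ Pp B.
lra.
Qed.

Lemma q_close (n k s : nat) (p eta : R) :
  0 < p < 1 -> (0 < n)%nat -> leq s n ->
  p * INR n <= INR n - INR s -> INR n - INR s < p * INR n + 1 ->
  0 < eta <= 1 -> INR k * INR k <= eta / 2 * (p * INR n) ->
  leq k n /\ p ^ k * (1 - eta) <= INR 'C(subn n s, k) / INR 'C(n, k) <= p ^ k * (1 + eta).
Proof.
move=> [p0 p1] n0 sn T1 T2 [e0 e1] kk.
have N0 : 0 < INR n by apply: lt_0_INR; apply/ssrnat.ltP.
case: k kk => [|k] kk.
  split => //; rewrite !bin0 /= Rdiv_1_r; lra.
set K := INR k.+1 in kk *.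
have K1 : 1 <= K by rewrite /K S_INR; have := pos_INR k; lra.
set T := subn n s.
have TR : INR T = INR n - INR s by rewrite /T minus_INR //; apply/ssrnat.leP.
have pn0 : 0 < p * INR n by nra.
have KT : K <= INR T by rewrite TR; nra.
have kT : leq k.+1 T by apply/ssrnat.leP; apply: INR_le.
have Tn : leq T n by apply: leq_subr.
split; first by apply: leq_trans kT Tn.
have [Lq Uq] := q_bounds n T k.+1 Tn kT n0.
set x := K / (p * INR n).
have x0 : 0 <= x by rewrite /x; apply: Rmult_le_pos; [lra | apply/Rlt_le/Rinv_0_lt_compat].
have kx : K * x <= eta / 2.
  rewrite /x; apply: (Rmult_le_reg_r (p * INR n)) => //.
  have -> : K * (K / (p * INR n)) * (p * INR n) = K * K by field; lra.
  lra.
have x1 : x <= eta / 2 by nra.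
split.
  apply: Rle_trans _ Lq.
  have L1 : p * (1 - x) <= (INR T - K) / INR n.
    apply: (Rmult_le_reg_r (INR n)) => //.
    have -> : (INR T - K) / INR n * INR n = INR T - K by field; lra.
    have -> : p * (1 - x) * INR n = p * INR n - K by rewrite /x; field; lra.
    lra.
  apply: Rle_trans (pow_incr _ _ _ (conj _ L1)); last by apply: Rmult_le_pos; lra.
  rewrite Rpow_mult_distr; apply: Rmult_le_compat_l; first by apply: pow_le; lra.
  have xx : 0 <= x <= 1 by lra.
  have := bern x k.+1 xx; rewrite -/K; nra.
apply: Rle_trans Uq _.
set y := / (p * INR n).
have y0 : 0 <= y by apply/Rlt_le/Rinv_0_lt_compat.
have U1 : INR T / INR n <= p * (1 + y).
  apply: (Rmult_le_reg_r (INR n)) => //.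
  have -> : INR T / INR n * INR n = INR T by field; lra.
  have -> : p * (1 + y) * INR n = p * INR n + 1 by rewrite /y; field; lra.
  lra.
apply: Rle_trans (pow_incr _ _ _ (conj _ U1)) _.
  by apply: Rmult_le_pos; [apply: pos_INR | apply/Rlt_le/Rinv_0_lt_compat].
rewrite Rpow_mult_distr; apply: Rmult_le_compat_l; first by apply: pow_le; lra.
have Ky : K * y = x by rewrite /x /y /Rdiv.
have ky1 : INR k.+1 * y < 1 by rewrite -/K Ky; lra.
have := upow y k.+1 y0 ky1.
rewrite -/K Ky => H; apply: Rle_trans H _.
have xpos : 0 < 1 - x by lra.
apply: (Rmult_le_reg_r (1 - x)) => //.
rewrite Rinv_l; last lra.
nra.
Qed.

Lemma step_n (n m k s : nat) (p zeta eta : R) :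
  (0 < n)%nat -> leq s n -> 0 < p < 1 ->
  p * INR n <= INR n - INR s -> INR n - INR s < p * INR n + 1 ->
  0 < eta -> eta <= 1/3 -> 3 * eta <= zeta ->
  INR k * INR k <= eta / 2 * (p * INR n) ->
  Rabs (Rprob n m k (good_event n m k s p zeta) - 1) <=
    2 * (2 ^ n * exp (- (eta ^ 2 / 6) * (INR 'C(subn n s, k) / INR 'C(n, k) * INR m))).
Proof.
move=> n0 sn pp T1 T2 e0 e1 ez kk.
have eb : 0 < eta <= 1 by lra.
have [kn [qlo qhi]] := q_close n k s p eta pp n0 sn T1 T2 eb kk.
set q := INR 'C(subn n s, k) / INR 'C(n, k) in qlo qhi *.
have pk0 : 0 <= p ^ k by apply: pow_le; lra.
have m0 : 0 <= INR m by apply: pos_INR.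
have P0 : 0 <= p ^ k * INR m by apply: Rmult_le_pos.
have Hq : Rabs (q * INR m - p ^ k * INR m) <= eta * (p ^ k * INR m).
  apply: Rabs_le; split; nra.
have q1 : q <= 1.
  rewrite /q; have C0 : 0 < INR 'C(n, k) by apply: lt_0_INR; apply/ssrnat.ltP; rewrite bin_gt0.
  apply: (Rmult_le_reg_r (INR 'C(n, k))) => //.
  rewrite /Rdiv Rmult_assoc Rinv_l ?Rmult_1_r ?Rmult_1_l; last lra.
  apply: le_INR; apply/ssrnat.leP; apply: leq_bin2l; apply: leq_subr.
have BB := bad_bound n m k s p zeta eta kn sn e0 e1 ez P0 Hq q1.
rewrite -/q in BB.
set G := good_event n m k s p zeta in BB *.
set V := INR #|[set w : outcome n m | valid k w]| in BB.
have V0 : 0 < V.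
  rewrite /V card_valid INR_expn; apply: pow_lt; rewrite mult_INR; apply: Rmult_lt_0_compat.
    by apply: lt_0_INR; apply/ssrnat.ltP; rewrite bin_gt0.
  by apply: lt_0_INR; apply/ssrnat.ltP; rewrite expn_gt0.
have split_card : INR #|[set w : outcome n m | valid k w && G w]| +
   INR #|[set w : outcome n m | valid k w && ~~ G w]| = V.
  rewrite /V -plus_INR; congr INR.
  rewrite -(cardsID [set w : outcome n m | G w] [set w : outcome n m | valid k w]).
  congr addn; apply: eq_card => w; rewrite !inE; first by []. by rewrite andbC.
have -> : Rprob n m k G - 1 =
   - (INR #|[set w : outcome n m | valid k w && ~~ G w]| / V).
  rewrite /Rprob -/V.
  move: split_card; set A1 := INR _; set A2 := INR _ => sc.
  rewrite -sc; field; lra.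
rewrite Rabs_Ropp Rabs_right; last first.
  apply: Rle_ge; apply: Rmult_le_pos; [apply: pos_INR | apply/Rlt_le/Rinv_0_lt_compat => //].
apply: (Rmult_le_reg_r V) => //.
rewrite /Rdiv Rmult_assoc Rinv_l; last lra.
rewrite Rmult_1_r; lra.
Qed.

Lemma sfun_facts (delta : R) (n : nat) : 0 < delta < 1/2 ->
  INR (sfun delta n) <= (1/2 - delta) * INR n /\
  (1/2 - delta) * INR n < INR (sfun delta n) + 1 /\ leq (sfun delta n) n.
Proof.
move=> [d0 d1].
have n0 := pos_INR n.
set r := (1/2 - delta) * INR n.
have r0 : 0 <= r by rewrite /r; nra.
have [b1 b2] := base_Int_part r.
have z0 : (0 <= Int_part r)%Z.
  have : (-1 < Int_part r)%Z by apply: lt_IZR; lra.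
  lia.
have E : INR (sfun delta n) = IZR (Int_part r).
  by rewrite /sfun -/r INR_IZR_INZ Z2Nat.id.
rewrite E; split; first by [].
split; first lra.
apply/ssrnat.leP; apply: INR_le; rewrite E; have rn : r <= INR n by rewrite /r; nra.
lra.
Qed.

Theorem lemma3p1 (delta : R) (k m : nat -> nat) :
  0 < delta < 1/2 ->
  Un_cv (fun n => INR (k n) / sqrt (INR n)) 0 ->
  cv_infty (fun n => (1/2 + delta) ^ (k n) * INR (m n) / INR n) ->
  forall zeta : R, 0 < zeta ->
  Un_cv (fun n => Rprob n (m n) (k n)
           (good_event n (m n) (k n) (sfun delta n) (1/2 + delta) zeta)) 1.
Proof.
move=> dd Hk Hm zeta z0 eps ep.
have [d0 d1] := dd.
set p := 1/2 + delta.
have pp : 0 < p < 1 by rewrite /p; lra.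
set z1 := Rmin zeta 1.
have z1p : 0 < z1 by rewrite /z1; apply: Rmin_glb_lt; lra.
have z1z : z1 <= zeta by apply: Rmin_l.
have z11 : z1 <= 1 by apply: Rmin_r.
set eta := z1 / 3.
have e0 : 0 < eta by rewrite /eta; lra.
have e1 : eta <= 1/3 by rewrite /eta; lra.
have ez : 3 * eta <= zeta by rewrite /eta; lra.
set c := eta ^ 2 / 6.
have c0 : 0 < c by rewrite /c; have := pow_lt eta 2 e0; lra.
set eps1 := Rmin 1 (eta / 2 * p).
have eps1p : 0 < eps1 by rewrite /eps1; apply: Rmin_glb_lt; nra.
have [N1 HN1] := Hk eps1 eps1p.
set A := Rmax 0 (ln (4 / eps)).
have A0 : 0 <= A by apply: Rmax_l.
have AA : ln (4 / eps) <= A by apply: Rmax_r.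
have ce : 0 < c * (1 - eta) by apply: Rmult_lt_0_compat; lra.
have [N2 HN2] := Hm ((ln 2 + A) / (c * (1 - eta))).
exists (maxn (maxn N1 N2) 1) => n Hn.
have Hn' : leq (maxn (maxn N1 N2) 1) n by apply/ssrnat.leP.
rewrite !geq_max in Hn'.
case/andP: Hn' => /andP[n1 n2] nn.
have N0 : 0 < INR n by apply: lt_0_INR; apply/ssrnat.ltP.
have N1' : 1 <= INR n by have := le_INR 1 n (ssrnat.leP nn); rewrite INR_1.
have kk : INR (k n) * INR (k n) <= eta / 2 * (p * INR n).
  have := HN1 n (ssrnat.leP n1); rewrite /R_dist /Rdist Rminus_0_r => H.
  have sq0 : 0 < sqrt (INR n) by apply: sqrt_lt_R0.
  have r0 : 0 <= INR (k n) / sqrt (INR n).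
    by apply: Rmult_le_pos; [apply: pos_INR | apply/Rlt_le/Rinv_0_lt_compat].
  rewrite Rabs_right in H; last lra.
  have le1 : eps1 <= 1 by apply: Rmin_l.
  have le2 : eps1 <= eta / 2 * p by apply: Rmin_r.
  have sq : (INR (k n) / sqrt (INR n)) * (INR (k n) / sqrt (INR n)) = INR (k n) * INR (k n) / INR n.
    have := sqrt_sqrt (INR n) (Rlt_le _ _ N0); move=> ss.
    have -> : INR (k n) / sqrt (INR n) * (INR (k n) / sqrt (INR n)) =
      INR (k n) * INR (k n) / (sqrt (INR n) * sqrt (INR n)) by field; lra.
    by rewrite ss.
  have : INR (k n) * INR (k n) / INR n < eta / 2 * p by rewrite -sq; nra.
  move=> h; apply: Rlt_le.
  have -> : INR (k n) * INR (k n) = (INR (k n) * INR (k n) / INR n) * INR n by field; lra.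
  nra.
have [s1 [s2 sn]] := sfun_facts delta n dd.
set s := sfun delta n in s1 s2 sn *.
have T1 : p * INR n <= INR n - INR s by rewrite /p; lra.
have T2 : INR n - INR s < p * INR n + 1 by rewrite /p; lra.
have Hstep := step_n n (m n) (k n) s p zeta eta nn sn pp T1 T2 e0 e1 ez kk.
rewrite /R_dist /Rdist.
apply: Rle_lt_trans Hstep _.
have eb : 0 < eta <= 1 by lra.
have [_ [qlo _]] := q_close n (k n) s p eta pp nn sn T1 T2 eb kk.
set q := INR 'C(subn n s, k n) / INR 'C(n, k n) in qlo *.
set P := p ^ k n * INR (m n).
have HP := HN2 n (ssrnat.leP n2).
rewrite -/p -/P in HP.
have HP' : (ln 2 + A) / (c * (1 - eta)) * INR n < P.
  apply: (Rmult_lt_reg_r (/ INR n)); first by apply: Rinv_0_lt_compat.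
  rewrite Rmult_assoc Rinv_r ?Rmult_1_r; last lra.
  exact: HP.
have m0 : 0 <= INR (m n) by apply: pos_INR.
have mu_lo : (1 - eta) * P <= q * INR (m n) by rewrite /P; nra.
have cmu : (ln 2 + A) * INR n < c * (q * INR (m n)).
  have h1 : (ln 2 + A) * INR n = c * (1 - eta) * ((ln 2 + A) / (c * (1 - eta)) * INR n) by field; lra.
  rewrite h1.
  have : c * (1 - eta) * ((ln 2 + A) / (c * (1 - eta)) * INR n) < c * (1 - eta) * P.
    by apply: Rmult_lt_compat_l.
  nra.
have l2 : 0 < ln 2 by rewrite -ln_1; apply: ln_increasing; lra.
have cmu' : INR n * ln 2 + A < c * (q * INR (m n)) by nra.
have -> : 2 ^ n = exp (ln 2 * INR n) by rewrite exp_nat exp_ln //; lra.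
rewrite -exp_plus.
have : exp (ln 2 * INR n + - (eta ^ 2 / 6) * (q * INR (m n))) <= exp (- A).
  apply: exp_mono; rewrite -/c; lra.
have : exp (- A) <= eps / 4.
  apply: Rle_trans (exp_mono _ _ (Ropp_le_contravar _ _ AA)) _.
  rewrite exp_Ropp exp_ln; last by apply: Rdiv_lt_0_compat; lra.
  have -> : / (4 / eps) = eps / 4 by field; lra.
  apply: Rle_refl.
lra.
Qed.
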